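(* Every group containing the free group $F_2$ has weak paradoxical towers.
   Context: For $n\in\mathbb N$, a group $G$ has weak $n$-paradoxical towers if for every $m\in\mathbb N$ there exist a finite subset $D\subseteq G$ with $|D|\ge m$, subsets $K_1,\dots,K_n\subseteq G$ and elements $g_1,\dots,g_n\in G$ such that for each $j$ the sets $\{dK_j\}_{d\in D}$ are pairwise disjoint, and $\bigcup_{j=1}^n g_jK_j=G$. $G$ has weak paradoxical towers if it has weak $n$-paradoxical towers for some $n$. *)

(* Defs.v *)
From Stdlib Require Import List Arith.
Import ListNotations.

Section Defs.
Context {G : Type} (mul : G -> G -> G) (one : G) (inv : G -> G).

Record is_group : Prop := {
  grp_assoc : forall x y z, mul x (mul y z) = mul (mul x y) z;
  grp_id_l  : forall x, mul one x = x;
  grp_id_r  : forall x, mul x one = x;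
  grp_inv_l : forall x, mul (inv x) x = one;
  grp_inv_r : forall x, mul x (inv x) = one }.

Definition ltrans (d : G) (K : G -> Prop) (x : G) : Prop :=
  exists k, K k /\ x = mul d k.

(* Words over {a, b, a^-1, b^-1}: a letter is (generator, inverted?),
   generator false = a, true = b. *)
Definition letter := (bool * bool)%type.

Definition eval_letter (a b : G) (l : letter) : G :=
  let base := if fst l then b else a in
  if snd l then inv base else base.

Definition eval_word (a b : G) (w : list letter) : G :=
  fold_right (fun l acc => mul (eval_letter a b l) acc) one w.

Fixpoint reduced (w : list letter) : Prop :=
  match w with
  | l1 :: ((l2 :: _) as t) => ~ (fst l1 = fst l2 /\ snd l1 <> snd l2) /\ reduced t
  | _ => True
  end.

Definition free_pair (a b : G) : Prop :=
  forall w, w <> [] -> reduced w -> eval_word a b w <> one.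

Definition contains_F2 : Prop := exists a b, free_pair a b.

Definition weak_n_paradoxical_towers (n : nat) : Prop :=
  forall m : nat, exists (D : list G) (K : nat -> G -> Prop) (g : nat -> G),
    NoDup D /\ m <= length D /\
    (forall j, j < n -> forall d d', In d D -> In d' D -> d <> d' ->
       forall x, ltrans d (K j) x -> ltrans d' (K j) x -> False) /\
    (forall x, exists j, j < n /\ ltrans (g j) (K j) x).

Definition weak_paradoxical_towers : Prop :=
  exists n, weak_n_paradoxical_towers n.
End Defs.

(* Main.v *)
Require Import Defs.
From Stdlib Require Import List Arith Lia ClassicalEpsilon FunctionalExtensionality PropExtensionality.
Import ListNotations.

Section Proof.
Variable G : Type.
Variables (mul : G -> G -> G) (one : G) (inv : G -> G).
Hypothesis HG : is_group mul one inv.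
Variables a b : G.
Hypothesis Hfree : free_pair mul one inv a b.

Notation ev := (eval_word mul one inv a b).
Notation evl := (eval_letter inv a b).

Lemma massoc x y z : mul x (mul y z) = mul (mul x y) z.
Proof. apply (grp_assoc _ _ _ HG). Qed.
Lemma m1l x : mul one x = x. Proof. apply (grp_id_l _ _ _ HG). Qed.
Lemma m1r x : mul x one = x. Proof. apply (grp_id_r _ _ _ HG). Qed.
Lemma mvl x : mul (inv x) x = one. Proof. apply (grp_inv_l _ _ _ HG). Qed.
Lemma mvr x : mul x (inv x) = one. Proof. apply (grp_inv_r _ _ _ HG). Qed.

Lemma cancel_l x y z : mul x y = mul x z -> y = z.
Proof.
  intro H. rewrite <- (m1l y), <- (m1l z), <- (mvl x), <- !massoc, H; reflexivity.
Qed.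
Lemma cancel_r x y z : mul y x = mul z x -> y = z.
Proof.
  intro H. rewrite <- (m1r y), <- (m1r z), <- (mvr x), !massoc, H; reflexivity.
Qed.
Lemma inv_mul x y : inv (mul x y) = mul (inv y) (inv x).
Proof.
  apply (cancel_l (mul x y)). rewrite mvr, massoc, <- (massoc x y), mvr, m1r, mvr.
  reflexivity.
Qed.
Lemma inv_one : inv one = one.
Proof. rewrite <- (m1l (inv one)). apply mvr. Qed.

Lemma ev_app l1 l2 : ev (l1 ++ l2) = mul (ev l1) (ev l2).
Proof.
  induction l1 as [|l l1 IH]; simpl.
  - rewrite m1l; reflexivity.
  - rewrite IH, massoc; reflexivity.
Qed.

Definition flip (l : letter) : letter := (fst l, negb (snd l)).
Definition winv (w : list letter) := rev (map flip w).

Lemma evl_flip l : evl (flip l) = inv (evl l).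
Proof.
  destruct l as [[|] [|]]; unfold flip, eval_letter; simpl; try reflexivity.
  - apply (cancel_l (inv b)). rewrite mvr, mvl. reflexivity.
  - apply (cancel_l (inv a)). rewrite mvr, mvl. reflexivity.
Qed.

Lemma ev_winv w : ev (winv w) = inv (ev w).
Proof.
  induction w as [|l w IH]; unfold winv in *; simpl.
  - rewrite inv_one; reflexivity.
  - rewrite ev_app, IH, inv_mul. simpl. rewrite m1r, evl_flip. reflexivity.
Qed.

Definition okp (x y : letter) := ~ (fst x = fst y /\ snd x <> snd y).

Lemma red_tail l w : reduced (l :: w) -> reduced w.
Proof. destruct w; simpl; tauto. Qed.

Lemma red_app l1 x l2 : reduced (l1 ++ [x]) -> reduced (x :: l2) -> reduced (l1 ++ x :: l2).
Proof.
  induction l1 as [|z l1 IH]; simpl; auto.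
  intros H1 H2. destruct l1 as [|z' l1]; simpl in *.
  - split; [tauto | exact H2].
  - split; [tauto|]. apply IH; tauto.
Qed.

Lemma red_snoc w l x : reduced (w ++ [l]) -> okp l x -> reduced (w ++ [l; x]).
Proof.
  intros H Hok. change [l; x] with ([l] ++ [x]). rewrite app_assoc.
  replace ((w ++ [l]) ++ [x]) with (w ++ l :: [x]) by (rewrite <- app_assoc; reflexivity).
  apply red_app; auto. simpl. split; auto.
Qed.

Lemma red_winv w : reduced w -> reduced (winv w).
Proof.
  induction w as [|l w IH]; intro H; unfold winv in *; simpl; auto.
  destruct w as [|l' w]; simpl; auto.
  simpl in IH. specialize (IH (red_tail _ _ H)).
  rewrite <- app_assoc. simpl.
  apply red_snoc; auto.
  destruct H as [H _]. unfold okp, flip. simpl. intros [E1 E2]. apply H.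
  split; auto. intro E. apply E2. rewrite E. reflexivity.
Qed.

Definition A : letter := (false, false).
Definition A' : letter := (false, true).
Definition B : letter := (true, false).

Lemma red_Bs k x l : fst x = false -> reduced (x :: l) -> reduced (repeat B k ++ x :: l).
Proof.
  intros Hx Hr. induction k as [|k IH]; simpl; auto.
  destruct k as [|k]; simpl in *.
  - split; auto. rewrite Hx. intros [E _]; discriminate.
  - split; auto. intros [_ E]; apply E; reflexivity.
Qed.

Lemma red_Bs0 k : reduced (repeat B k).
Proof.
  induction k as [|k IH]; simpl; auto.
  destruct k; simpl in *; auto. split; auto. intros [_ E]; apply E; reflexivity.
Qed.

Lemma ev_Bs i k : ev (repeat B (i + k)) = mul (ev (repeat B i)) (ev (repeat B k)).
Proof. rewrite repeat_app, ev_app. reflexivity. Qed.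

Lemma key c r r' k : fst c = false -> reduced (c :: r) -> reduced (c :: r') ->
  ev (c :: r) = mul (ev (repeat B (S k))) (ev (c :: r')) -> False.
Proof.
  intros Hc Hr Hr' E.
  apply (Hfree (winv (c :: r) ++ repeat B (S k) ++ c :: r')).
  - destruct (winv (c :: r)); discriminate.
  - unfold winv at 1. simpl. rewrite <- app_assoc. simpl.
    apply red_app.
    + pose proof (red_winv _ Hr) as W. unfold winv in W. simpl in W. exact W.
    + simpl. split.
      * unfold flip. simpl. rewrite Hc. intros [E1 _]; discriminate.
      * apply (red_Bs (S k) c r' Hc Hr').
  - rewrite ev_app, ev_app, ev_winv, <- E, mvl. reflexivity.
Qed.

Definition rel (x y : G) := exists u, x = mul (ev u) y.

Lemma rel_refl x : rel x x.
Proof. exists []. simpl. rewrite m1l; reflexivity. Qed.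
Lemma rel_sym x y : rel x y -> rel y x.
Proof.
  intros [u Hu]. exists (winv u). rewrite ev_winv, Hu, massoc, mvl, m1l. reflexivity.
Qed.
Lemma rel_trans x y z : rel x y -> rel y z -> rel x z.
Proof.
  intros [u Hu] [v Hv]. exists (u ++ v). rewrite ev_app, Hu, Hv, massoc. reflexivity.
Qed.

Definition rep (x : G) : G := epsilon (inhabits one) (fun y => rel x y).

Lemma rel_rep x : rel x (rep x).
Proof. unfold rep. apply epsilon_spec. exists x. apply rel_refl. Qed.

Lemma rep_eq x y : rel x y -> rep x = rep y.
Proof.
  intro H. unfold rep. f_equal. apply functional_extensionality. intro z.
  apply propositional_extensionality. split; intro H'.
  - eapply rel_trans; [apply rel_sym; exact H | exact H'].
  - eapply rel_trans; [exact H | exact H'].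
Qed.

Definition cancels (l l' : letter) : bool :=
  Bool.eqb (fst l) (fst l') && negb (Bool.eqb (snd l) (snd l')).

Definition push (l : letter) (r : list letter) :=
  match r with
  | l' :: r' => if cancels l l' then r' else l :: r
  | [] => [l]
  end.

Fixpoint red (w : list letter) := match w with [] => [] | l :: w' => push l (red w') end.

Lemma push_red l r : reduced r -> reduced (push l r).
Proof.
  destruct r as [|l' r]; simpl; auto.
  intro H. destruct (cancels l l') eqn:E.
  - exact (red_tail _ _ H).
  - simpl. split; auto.
    destruct l as [[|] [|]], l' as [[|] [|]]; simpl in *; try discriminate;
    intros [E1 E2]; try discriminate; apply E2; reflexivity.
Qed.

Lemma push_ev l r : ev (push l r) = mul (evl l) (ev r).
Proof.
  destruct r as [|l' r]; simpl; auto.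
  destruct (cancels l l') eqn:E; simpl; auto.
  rewrite massoc.
  destruct l as [[|] [|]], l' as [[|] [|]]; simpl in *; try discriminate;
  unfold eval_letter; simpl; rewrite ?mvl, ?mvr, m1l; reflexivity.
Qed.

Lemma red_ok w : reduced (red w) /\ ev (red w) = ev w.
Proof.
  induction w as [|l w [IH1 IH2]]; simpl; auto.
  split. apply push_red; auto. rewrite push_ev, IH2. reflexivity.
Qed.

Definition cj (j : nat) : letter := if Nat.eqb j 0 then A else A'.

Definition K (j : nat) (y : G) : Prop :=
  exists r, reduced (cj j :: r) /\ y = mul (ev (cj j :: r)) (rep y).

Definition bpow (i : nat) : G := ev (repeat B i).

Lemma disj_lt j i k x : ltrans mul (bpow i) (K j) x -> ltrans mul (bpow (i + S k)) (K j) x -> False.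
Proof.
  intros [y [[r [Hr Hy]] Hx]] [y' [[r' [Hr' Hy']] Hx']].
  assert (Hfc : fst (cj j) = false) by (unfold cj; destruct (Nat.eqb j 0); reflexivity).
  unfold bpow in *. rewrite ev_Bs in Hx'.
  rewrite Hx, <- massoc in Hx'. apply cancel_l in Hx'.
  assert (rep y = rep y').
  { apply rep_eq. exists (repeat B (S k)). exact Hx'. }
  assert (E : mul (ev (cj j :: r)) (rep y') = mul (mul (ev (repeat B (S k))) (ev (cj j :: r'))) (rep y')).
  { rewrite <- massoc, <- Hy', <- H, <- Hy. exact Hx'. }
  apply cancel_r in E.
  exact (key _ _ _ _ Hfc Hr Hr' E).
Qed.

Lemma bpow_inj i j : bpow i = bpow j -> i = j.
Proof.
  intro E. destruct (Nat.lt_total i j) as [H|[H|H]]; auto; exfalso.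
  - replace j with (i + S (j - i - 1)) in E by lia. unfold bpow in E.
    rewrite ev_Bs in E. rewrite <- (m1r (ev (repeat B i))) in E at 1.
    apply cancel_l in E. apply (Hfree (repeat B (S (j - i - 1)))).
    discriminate. apply red_Bs0. auto.
  - replace i with (j + S (i - j - 1)) in E by lia. unfold bpow in E.
    rewrite ev_Bs in E. rewrite <- (m1r (ev (repeat B j))) in E at 2.
    apply cancel_l in E. apply (Hfree (repeat B (S (i - j - 1)))).
    discriminate. apply red_Bs0. auto.
Qed.

Lemma towers : weak_n_paradoxical_towers mul 2.
Proof.
  intro m. exists (map bpow (seq 0 m)), K, (fun j => if Nat.eqb j 0 then one else a).
  split; [|split; [|split]].
  - apply NoDup_map_NoDup_ForallPairs. intros i j _ _; apply bpow_inj. apply seq_NoDup.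
  - rewrite length_map, length_seq. auto.
  - intros j _ d d' Hd Hd' Hne x H1 H2.
    apply in_map_iff in Hd as [i [<- _]]. apply in_map_iff in Hd' as [i' [<- _]].
    destruct (Nat.lt_total i i') as [L|[L|L]].
    + replace i' with (i + S (i' - i - 1)) in H2 by lia. exact (disj_lt _ _ _ _ H1 H2).
    + subst; auto.
    + replace i with (i' + S (i - i' - 1)) in H1 by lia. exact (disj_lt _ _ _ _ H2 H1).
  - intro x. destruct (rel_rep x) as [u Hu].
    destruct (red_ok u) as [Hr Hev]. rewrite <- Hev in Hu.
    remember (red u) as r eqn:Er. clear Er Hev.
    assert (Hcase : (exists r', r = A :: r') \/ reduced (A' :: r)).
    { destruct r as [|l r']; [right; exact I|].
      destruct l as [[|] [|]]; try (left; eexists; reflexivity); right; simpl;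
      (split; [intros [E1 E2]; try discriminate; apply E2; reflexivity | exact Hr]). }
    destruct Hcase as [[r' ->]|Hr'].
    + exists 0. split; [lia|]. exists x. split; [|simpl; rewrite m1l; reflexivity].
      exists r'. split; [exact Hr|]. exact Hu.
    + exists 1. split; [lia|]. exists (mul (inv a) x). split.
      * exists r. split; [exact Hr'|].
        assert (rep (mul (inv a) x) = rep x) as ->.
        { apply rep_eq. exists [A']. simpl. rewrite m1r. reflexivity. }
        rewrite Hu at 1. simpl. unfold eval_letter; simpl. rewrite massoc. reflexivity.
      * simpl. rewrite massoc, mvr, m1l. reflexivity.
Qed.

End Proof.

Theorem corollary3p13 (G : Type) (mul : G -> G -> G) (one : G) (inv : G -> G)
  (HG : is_group mul one inv) :
  contains_F2 mul one inv -> weak_paradoxical_towers mul.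
Proof.
  intros [a [b Hf]]. exists 2. exact (towers G mul one inv HG a b Hf).
Qed.
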